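(* Let $\Sigma 2$ be the Sierpiński space and $\Sigma\mathbb{N}$ the natural numbers with the Scott topology of the usual order (which is $S^{\ast}$-well-filtered). Then the function space $[\Sigma 2,\Sigma\mathbb{N}]$ with the Isbell topology is not weak well-filtered, hence not $S^{\ast}$-well-filtered. Thus $Y$ being $S^{\ast}$-well-filtered does not imply that $[X,Y]$ is $S^{\ast}$-well-filtered for nonempty $T_0$-spaces $X$.
   Context: $\Sigma 2$ is the two-element chain $0<1$ with its Scott topology (open sets $\emptyset,\{1\},\{0,1\}$). $[X,Y]$ denotes the set of continuous maps $X\to Y$ with the Isbell topology, generated by the subbasic sets $N(H\leftarrow V)=\{f\mid f^{-1}(V)\in H\}$ where $H$ is a Scott open subset of the complete lattice $\mathcal{O}(X)$ of open sets of $X$ and $V$ is open in $Y$. For a space $Z$, ${\uparrow}$ is taken in the specialization order ($x\le y$ iff $x\in cl\{y\}$); $K(Z)$ is the set of nonempty compact saturated (= upper) subsets; a family in $K(Z)$ is filtered if any two members contain a common member. $Z$ is weak well-filtered if for every filtered $\{K_i\}\subseteq K(Z)$ and nonempty open $U$, $\bigcap_i K_i\subseteq U$ implies $K_i\subseteq U$ for some $i$; $Z$ is $S^{\ast}$-well-filtered if for every filtered $\{K_i\}\subseteq K(Z)$, $G\in K(Z)$ and nonempty open $U$, $\bigcap_i K_i\cap G\subseteq U$ implies $K_i\cap G\subseteq U$ for some $i$. *)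

(* Defs.v *)
From Stdlib Require Import List Arith.


Inductive generated {T : Type} (S : (T -> Prop) -> Prop) : (T -> Prop) -> Prop :=
  | g_sub U : S U -> generated S U
  | g_full : generated S (fun _ => True)
  | g_inter U V : generated S U -> generated S V -> generated S (fun x => U x /\ V x)
  | g_union (F : (T -> Prop) -> Prop) :
      (forall U, F U -> generated S U) -> generated S (fun x => exists U, F U /\ U x)
  | g_ext U V : generated S U -> (forall x, U x <-> V x) -> generated S V.

Definition is_ub {T} (le : T -> T -> Prop) (D : T -> Prop) (u : T) :=
  forall d, D d -> le d u.
Definition is_sup {T} (le : T -> T -> Prop) (D : T -> Prop) (s : T) :=
  is_ub le D s /\ forall u, is_ub le D u -> le s u.
Definition directed {T} (le : T -> T -> Prop) (D : T -> Prop) :=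
  (exists d, D d) /\
  forall a b, D a -> D b -> exists c, D c /\ le a c /\ le b c.
Definition scott_open {T} (le : T -> T -> Prop) (U : T -> Prop) :=
  (forall x y, U x -> le x y -> U y) /\
  forall D s, directed le D -> is_sup le D s -> U s -> exists d, D d /\ U d.

(** Sigma 2 : the chain 0 < 1 (false < true) with its Scott topology. *)
Definition le2 (a b : bool) : Prop := implb a b = true.
Definition Sigma2_open : (bool -> Prop) -> Prop := scott_open le2.

Definition SigmaN_open : (nat -> Prop) -> Prop := scott_open le.

Definition continuous {X Y} (OX : (X -> Prop) -> Prop) (OY : (Y -> Prop) -> Prop)
  (f : X -> Y) := forall V, OY V -> OX (fun x => V (f x)).

Definition opens_of {X} (OX : (X -> Prop) -> Prop) := { U : X -> Prop | OX U }.
Definition opens_le {X} (OX : (X -> Prop) -> Prop) (U V : opens_of OX) : Prop :=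
  forall x, proj1_sig U x -> proj1_sig V x.

Definition cmap {X Y} (OX : (X -> Prop) -> Prop) (OY : (Y -> Prop) -> Prop) :=
  { f : X -> Y | continuous OX OY f }.

Definition isbell_subbasic {X Y} (OX : (X -> Prop) -> Prop) (OY : (Y -> Prop) -> Prop)
  (W : cmap OX OY -> Prop) : Prop :=
  exists (H : opens_of OX -> Prop) (V : Y -> Prop),
    scott_open (@opens_le X OX) H /\ OY V /\
    forall f : cmap OX OY,
      W f <-> exists p : OX (fun x => V (proj1_sig f x)),
                H (exist _ (fun x => V (proj1_sig f x)) p).

Definition isbell_open {X Y} (OX : (X -> Prop) -> Prop) (OY : (Y -> Prop) -> Prop) :
  (cmap OX OY -> Prop) -> Prop := generated (@isbell_subbasic X Y OX OY).

Definition spec_le {Z} (O : (Z -> Prop) -> Prop) (x y : Z) : Prop :=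
  forall U, O U -> U x -> U y.   (* x \in cl{y} *)
Definition saturated {Z} (O : (Z -> Prop) -> Prop) (K : Z -> Prop) :=
  forall x y, K x -> spec_le O x y -> K y.
Definition compact {Z} (O : (Z -> Prop) -> Prop) (K : Z -> Prop) :=
  forall F : (Z -> Prop) -> Prop,
    (forall U, F U -> O U) ->
    (forall x, K x -> exists U, F U /\ U x) ->
    exists l : list (Z -> Prop),
      (forall U, In U l -> F U) /\ (forall x, K x -> exists U, In U l /\ U x).
Definition KZ {Z} (O : (Z -> Prop) -> Prop) (K : Z -> Prop) :=
  (exists x, K x) /\ compact O K /\ saturated O K.

Definition filtered_fam {Z} (Fam : (Z -> Prop) -> Prop) :=
  (exists K, Fam K) /\
  forall K1 K2, Fam K1 -> Fam K2 ->
    exists K3, Fam K3 /\ (forall x, K3 x -> K1 x) /\ (forall x, K3 x -> K2 x).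

Definition weak_well_filtered {Z} (O : (Z -> Prop) -> Prop) :=
  forall Fam : (Z -> Prop) -> Prop,
    (forall K, Fam K -> KZ O K) -> filtered_fam Fam ->
    forall U, O U -> (exists x, U x) ->
      (forall x, (forall K, Fam K -> K x) -> U x) ->
      exists K, Fam K /\ forall x, K x -> U x.

Definition S_star_well_filtered {Z} (O : (Z -> Prop) -> Prop) :=
  forall Fam : (Z -> Prop) -> Prop,
    (forall K, Fam K -> KZ O K) -> filtered_fam Fam ->
    forall G, KZ O G ->
    forall U, O U -> (exists x, U x) ->
      (forall x, (forall K, Fam K -> K x) -> G x -> U x) ->
      exists K, Fam K /\ forall x, K x -> G x -> U x.

(* Main.v *)
Require Import Defs.
From Stdlib Require Import List Arith.
From Stdlib Require Import Classical Lia.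

Lemma nat_up_open n : SigmaN_open (fun k => n <= k).
Proof.
  split. intros; lia.
  intros D s [[d0 Hd0] _] [Hub Hleast] Hs.
  destruct (classic (exists d, D d /\ n <= d)) as [H|H]; [exact H|].
  exfalso. destruct n as [|n].
  - apply H. exists d0. split; auto; lia.
  - assert (s <= n). apply Hleast. intros d Hd.
    destruct (le_lt_dec (S n) d); [exfalso; apply H; eauto|lia].
    lia.
Qed.

Lemma bool_open P : (forall x y, P x -> le2 x y -> P y) -> Sigma2_open P.
Proof.
  intros Hup. split; [exact Hup|].
  intros D s [[d0 Hd0] _] [Hub Hleast] Hs. destruct s.
  - destruct (classic (D true)) as [Ht|Ht]. exists true; auto.
    exfalso. assert (le2 true false) as Hc.
    { apply Hleast. intros d Hd. destruct d; [contradiction| reflexivity]. }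
    discriminate Hc.
  - exists d0. split; auto. apply Hup with false; auto. reflexivity.
Qed.

Lemma mk_cont a b : a <= b ->
  continuous Sigma2_open SigmaN_open (fun x : bool => if x then b else a).
Proof.
  intros hab V HV. apply bool_open. intros x y Hx Hxy.
  destruct x, y; simpl in *; try exact Hx; try discriminate.
  apply (proj1 HV) with a; auto.
Qed.

Definition mk a b (h : a <= b) : cmap Sigma2_open SigmaN_open :=
  exist _ (fun x : bool => if x then b else a) (mk_cont a b h).

Lemma H_open (t : bool) :
  scott_open (@opens_le bool Sigma2_open) (fun W => proj1_sig W t).
Proof.
  split.
  - intros W1 W2 H1 Hle. exact (Hle t H1).
  - intros D s [[d0 Hd0] _] [Hub Hleast] Hs.
    destruct (classic (exists d, D d /\ proj1_sig d t)) as [H|H]; [exact H|].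
    exfalso. destruct t.
    + assert (Ho : Sigma2_open (fun _ => False)).
      { apply bool_open. auto. }
      assert (opens_le Sigma2_open s (exist _ _ Ho)) as Hl.
      { apply Hleast. intros d Hd x Hx. apply H. exists d. split; auto.
        destruct x; [exact Hx|]. apply (proj1 (proj2_sig d)) with false; [exact Hx|reflexivity]. }
      exact (Hl true Hs).
    + assert (Ho : Sigma2_open (fun b => b = true)).
      { apply bool_open. intros x y Hx Hxy. subst. destruct y; auto. }
      assert (opens_le Sigma2_open s (exist _ _ Ho)) as Hl.
      { apply Hleast. intros d Hd x Hx. destruct x; [reflexivity|].
        exfalso. apply H. exists d. split; auto. }
      discriminate (Hl false Hs).
Qed.

Lemma isbell_ge (t : bool) n :
  isbell_open Sigma2_open SigmaN_open (fun f => n <= proj1_sig f t).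
Proof.
  apply g_sub. exists (fun W => proj1_sig W t), (fun k => n <= k).
  split; [apply H_open|]. split; [apply nat_up_open|].
  intros f; split.
  - intros Hf. exists (proj2_sig f _ (nat_up_open n)). simpl. exact Hf.
  - intros [p Hp]. exact Hp.
Qed.

Lemma isbell_upper W : isbell_open Sigma2_open SigmaN_open W ->
  forall f g, W f -> (forall x, proj1_sig f x <= proj1_sig g x) -> W g.
Proof.
  intros HW. induction HW; intros f g Hf Hle.
  - destruct H as [H [V [HH [HV Hiff]]]].
    apply Hiff in Hf. destruct Hf as [p Hp]. apply Hiff.
    exists (proj2_sig g V HV). apply (proj1 HH) with (exist _ _ p); auto.
    intro x; simpl. intros Hx. apply (proj1 HV) with (proj1_sig f x); auto.
  - exact I.
  - destruct Hf; split; eauto.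
  - destruct Hf as [U [HU HUf]]. exists U. split; [exact HU|]. apply (H0 U HU f g HUf Hle).
  - apply H. apply IHHW with f; auto. apply H; auto.
Qed.

Lemma compact_up (c : cmap Sigma2_open SigmaN_open) K : K c ->
  (forall y, K y -> forall x, proj1_sig c x <= proj1_sig y x) ->
  compact (isbell_open Sigma2_open SigmaN_open) K.
Proof.
  intros Hc Hle F HFo Hcov. destruct (Hcov c Hc) as [U [HU Uc]].
  exists (U :: nil). split.
  - intros U' [<-|[]]; auto.
  - intros y Hy. exists U. split; [left; reflexivity|].
    apply isbell_upper with c; auto.
Qed.

Definition Kn n := fun f : cmap Sigma2_open SigmaN_open => n <= proj1_sig f true.

Lemma KZ_Kn n : KZ (isbell_open Sigma2_open SigmaN_open) (Kn n).
Proof.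
  split; [|split].
  - exists (mk 0 n (Nat.le_0_l n)). unfold Kn; simpl; lia.
  - apply compact_up with (mk 0 n (Nat.le_0_l n)).
    + unfold Kn; simpl; lia.
    + intros y Hy x. unfold Kn in Hy. destruct x; simpl; lia.
  - intros x y Hx Hs. apply Hs; [apply isbell_ge|exact Hx].
Qed.

Lemma KZ_True : KZ (isbell_open Sigma2_open SigmaN_open) (fun _ => True).
Proof.
  split; [|split].
  - exists (mk 0 0 (le_n 0)). exact I.
  - apply compact_up with (mk 0 0 (le_n 0)); auto.
    intros y _ x. destruct x; simpl; lia.
  - intros x y _ _. exact I.
Qed.

Lemma not_wwf : ~ weak_well_filtered (isbell_open Sigma2_open SigmaN_open).
Proof.
  intros Hw.
  destruct (Hw (fun K => exists n, K = Kn n)) with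
    (U := fun f : cmap Sigma2_open SigmaN_open => 1 <= proj1_sig f false)
    as [K [[n ->] HK]].
  - intros K [n ->]. apply KZ_Kn.
  - split. exists (Kn 0). exists 0. reflexivity.
    intros K1 K2 [n ->] [m ->]. exists (Kn (max n m)). split.
    exists (max n m); reflexivity.
    split; intros x; unfold Kn; lia.
  - apply isbell_ge.
  - exists (mk 1 1 (le_n 1)). simpl; lia.
  - intros x Hx. exfalso.
    specialize (Hx (Kn (S (proj1_sig x true))) (ex_intro _ _ eq_refl)).
    unfold Kn in Hx; lia.
  - specialize (HK (mk 0 n (Nat.le_0_l n)) (le_n n)). simpl in HK. lia.
Qed.

Lemma N_sstar : S_star_well_filtered SigmaN_open.
Proof.
  intros Fam HK [[K0 HK0] Hdir] G _ U HU [u0 Hu0] Hint.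
  assert (claim : forall n, exists K, Fam K /\
            forall x, x < n -> K x -> G x -> U x).
  { induction n.
    - exists K0; split; auto; intros; lia.
    - destruct IHn as [K [HFK HKn]].
      destruct (classic (forall K', Fam K' -> K' n)) as [Hall|Hnot].
      + exists K. split; auto. intros x Hx HKx HGx.
        destruct (Nat.eq_dec x n) as [->|Hne]. apply Hint; auto.
        apply HKn; auto; lia.
      + apply not_all_ex_not in Hnot. destruct Hnot as [K' HK'].
        apply imply_to_and in HK'. destruct HK' as [HF' HK'].
        destruct (Hdir K K' HFK HF') as [K3 [HF3 [H31 H32]]].
        exists K3. split; auto. intros x Hx HK3 HG.
        destruct (Nat.eq_dec x n) as [->|Hne].
        * exfalso; apply HK'; auto.
        * apply HKn; auto; lia. }
  destruct (claim u0) as [K [HFK HKU]]. exists K. split; auto.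
  intros x HKx HGx. destruct (Nat.lt_ge_cases x u0).
  - apply HKU; auto.
  - apply (proj1 HU) with u0; auto.
Qed.

Theorem mainTheorem19 :
  S_star_well_filtered SigmaN_open /\
  ~ weak_well_filtered (isbell_open Sigma2_open SigmaN_open) /\
  ~ S_star_well_filtered (isbell_open Sigma2_open SigmaN_open).
Proof.
  split; [apply N_sstar|]. split; [apply not_wwf|].
  intros Hs. apply not_wwf. intros Fam HK Hf U HU Hne Hint.
  destruct (Hs Fam HK Hf (fun _ => True) KZ_True U HU Hne (fun x Hx _ => Hint x Hx))
    as [K [HFK HKU]].
  exists K; split; auto.
Qed.
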